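(* Let $d=2$. The convex envelope of $s\mapsto s_{1n}s_{2n}$ over $Q$ is $$\check b(s)=\max_{\pi\in\Pi}\Bigl\{a_{10}a_{2n}+\sum_{t:\pi_t=1}a_{2(n-p^t_2)}\bigl(s_{1p^t_1}-s_{1p^{t-1}_1}\bigr)+\sum_{t:\pi_t=2}a_{1p^t_1}\bigl(a_{2(n-p^t_2)}-a_{2(n-p^{t-1}_2)}-s_{2(n-p^t_2)}+s_{2(n-p^{t-1}_2)}\bigr)\Bigr\},$$ and the concave envelope of $s\mapsto s_{1n}s_{2n}$ over $Q$ is $$\hat b(s)=\min_{\pi\in\Pi}\Bigl\{a_{10}a_{20}+\sum_{t:\pi_t=1}a_{2p^t_2}\bigl(s_{1p^t_1}-s_{1p^{t-1}_1}\bigr)+\sum_{t:\pi_t=2}a_{1p^t_1}\bigl(s_{2p^t_2}-s_{2p^{t-1}_2}\bigr)\Bigr\}.$$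
   Context: Let $n$ be a positive integer and $a=(a_1,a_2)\in\mathbb{R}^{2\times(n+1)}$ with $a_{i0}<a_{i1}<\dots<a_{in}$, $i=1,2$. Let $v_{ij}\in\mathbb{R}^{n+1}$ have $k$-th component $a_{i,\min\{k,j\}}$ ($k=0,\dots,n$), $Q_i=\operatorname{conv}\{v_{i0},\dots,v_{in}\}$, $Q=Q_1\times Q_2$, points $s=(s_1,s_2)$, $s_i=(s_{i0},\dots,s_{in})$. $\Pi$ is the set of direction vectors $\pi=(\pi_1,\dots,\pi_{2n})\in\{1,2\}^{2n}$ with exactly $n$ entries equal to $1$ and $n$ equal to $2$; for $\pi\in\Pi$ set $p^0=(0,0)$ and $p^t=p^{t-1}+e_{\pi_t}$, $t\in[2n]$, where $e_1,e_2$ are unit vectors in $\mathbb{R}^2$. *)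

(* Defs.v *)
From HB Require Import structures.
From mathcomp Require Import all_boot all_order all_algebra.
From mathcomp Require Import reals.
Set Implicit Arguments. Unset Strict Implicit. Unset Printing Implicit Defensive.
Import Order.TTheory GRing.Theory Num.Theory.
Local Open Scope ring_scope.

Definition pt (R : Type) (n : nat) := (('I_n.+1 -> R) * ('I_n.+1 -> R))%type.

Definition vtx (R : Type) (n : nat) (ai : 'I_n.+1 -> R) (j : 'I_n.+1)
  : 'I_n.+1 -> R := fun k => ai (if (k <= j)%N then k else j).

Definition in_Qi (R : realType) (n : nat) (ai : 'I_n.+1 -> R)
  (x : 'I_n.+1 -> R) : Prop :=
  exists lam : 'I_n.+1 -> R,
    [/\ forall j, 0 <= lam j, \sum_j lam j = 1
      & forall k, x k = \sum_j lam j * vtx ai j k].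

Definition inQ (R : realType) (n : nat) (a1 a2 : 'I_n.+1 -> R) (s : pt R n)
  : Prop := in_Qi a1 s.1 /\ in_Qi a2 s.2.

Definition comb (R : realType) (n : nat) (t : R) (x y : pt R n) : pt R n :=
  (fun k => t * x.1 k + (1 - t) * y.1 k, fun k => t * x.2 k + (1 - t) * y.2 k).

Definition convex_on (R : realType) (n : nat) (D : pt R n -> Prop)
  (g : pt R n -> R) : Prop :=
  forall x y t, D x -> D y -> 0 <= t <= 1 ->
    g (comb t x y) <= t * g x + (1 - t) * g y.

Definition concave_on (R : realType) (n : nat) (D : pt R n -> Prop)
  (g : pt R n -> R) : Prop :=
  forall x y t, D x -> D y -> 0 <= t <= 1 ->
    t * g x + (1 - t) * g y <= g (comb t x y).

Definition is_convex_envelope (R : realType) (n : nat) (D : pt R n -> Prop)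
  (f g : pt R n -> R) : Prop :=
  [/\ convex_on D g, (forall x, D x -> g x <= f x)
    & forall h, convex_on D h -> (forall x, D x -> h x <= f x) ->
        forall x, D x -> h x <= g x].

Definition is_concave_envelope (R : realType) (n : nat) (D : pt R n -> Prop)
  (f g : pt R n -> R) : Prop :=
  [/\ concave_on D g, (forall x, D x -> f x <= g x)
    & forall h, concave_on D h -> (forall x, D x -> f x <= h x) ->
        forall x, D x -> g x <= h x].

Definition bil (R : realType) (n : nat) (s : pt R n) : R :=
  s.1 ord_max * s.2 ord_max.

(* Direction vectors: pi u = true encodes pi_{u+1} = 1, false encodes = 2
   (u : 'I_(2n) is the 0-based version of t in [2n]). *)
Definition dirs (n : nat) : {set {ffun 'I_(n + n) -> bool}} :=
  [set pi : {ffun 'I_(n + n) -> bool} | (\sum_(u < n + n | pi u) 1)%N == n].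

Definition p1 (n : nat) (pi : {ffun 'I_(n + n) -> bool}) (t : nat) : nat :=
  (\sum_(u < n + n | (u < t)%N && pi u) 1)%N.
Definition p2 (n : nat) (pi : {ffun 'I_(n + n) -> bool}) (t : nat) : nat :=
  (\sum_(u < n + n | (u < t)%N && ~~ pi u) 1)%N.

(* a particular element of Pi (1,...,1,2,...,2), used as seed of the max/min *)
Definition pi0 (n : nat) : {ffun 'I_(n + n) -> bool} := [ffun u : 'I_(n + n) => (u < n)%N].

(* term inside the max, for direction pi (paper's t = u+1) *)
Definition Fcheck (R : realType) (n : nat) (a1 a2 : 'I_n.+1 -> R)
  (pi : {ffun 'I_(n + n) -> bool}) (s : pt R n) : R :=
  a1 (inord 0) * a2 (inord n)
  + \sum_(u < n + n | pi u)
      a2 (inord (n - p2 pi u.+1)%N)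
        * (s.1 (inord (p1 pi u.+1)) - s.1 (inord (p1 pi u)))
  + \sum_(u < n + n | ~~ pi u)
      a1 (inord (p1 pi u.+1))
        * (a2 (inord (n - p2 pi u.+1)%N) - a2 (inord (n - p2 pi u)%N)
           - s.2 (inord (n - p2 pi u.+1)%N) + s.2 (inord (n - p2 pi u)%N)).

Definition Fhat (R : realType) (n : nat) (a1 a2 : 'I_n.+1 -> R)
  (pi : {ffun 'I_(n + n) -> bool}) (s : pt R n) : R :=
  a1 (inord 0) * a2 (inord 0)
  + \sum_(u < n + n | pi u)
      a2 (inord (p2 pi u.+1))
        * (s.1 (inord (p1 pi u.+1)) - s.1 (inord (p1 pi u)))
  + \sum_(u < n + n | ~~ pi u)
      a1 (inord (p1 pi u.+1))
        * (s.2 (inord (p2 pi u.+1)) - s.2 (inord (p2 pi u))).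

Definition bcheck (R : realType) (n : nat) (a1 a2 : 'I_n.+1 -> R)
  (s : pt R n) : R :=
  \big[Num.max/Fcheck a1 a2 (pi0 n) s]_(pi in dirs n) Fcheck a1 a2 pi s.
Definition bhat (R : realType) (n : nat) (a1 a2 : 'I_n.+1 -> R)
  (s : pt R n) : R :=
  \big[Num.min/Fhat a1 a2 (pi0 n) s]_(pi in dirs n) Fhat a1 a2 pi s.

(* Main.v *)
Require Import Defs.
From HB Require Import structures.
From mathcomp Require Import all_boot all_order all_algebra.
From mathcomp Require Import reals.
From mathcomp Require Import ring lra zify.
Import Order.TTheory GRing.Theory Num.Theory.
Local Open Scope ring_scope.
Set Implicit Arguments. Unset Strict Implicit. Unset Printing Implicit Defensive.


Section Paths.
Variable n : nat.
Implicit Types pi : {ffun 'I_(n + n) -> bool}.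

Lemma p1_0 pi : p1 pi 0 = 0%N.
Proof. by rewrite /p1 big_pred0. Qed.
Lemma p2_0 pi : p2 pi 0 = 0%N.
Proof. by rewrite /p2 big_pred0. Qed.

Lemma p1S pi (u : 'I_(n + n)) : p1 pi u.+1 = (p1 pi u + pi u)%N.
Proof.
rewrite /p1; case piu: (pi u).
  rewrite (bigD1 u) /=; last by rewrite ltnSn piu.
  rewrite addnC; congr (_ + _)%N; apply: eq_bigl => v.
  rewrite ltnS ltn_neqAle -val_eqE /=.
  by case: (pi v); case: (val v == val u); case: (val v <= val u)%N.
rewrite addn0; apply: eq_bigl => v; rewrite ltnS leq_eqVlt.
by case: eqP => //= /val_inj ->; rewrite piu andbF.
Qed.

Lemma p2S pi (u : 'I_(n + n)) : p2 pi u.+1 = (p2 pi u + ~~ pi u)%N.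
Proof.
rewrite /p2; case piu: (pi u) => /=.
  rewrite addn0; apply: eq_bigl => v; rewrite ltnS leq_eqVlt.
  by case: eqP => //= /val_inj ->; rewrite piu andbF.
rewrite (bigD1 u) /=; last by rewrite ltnSn piu.
rewrite addnC; congr (_ + _)%N; apply: eq_bigl => v.
rewrite ltnS ltn_neqAle -val_eqE /=.
by case: (pi v); case: (val v == val u); case: (val v <= val u)%N.
Qed.

Lemma p1_mono pi t t' : (t <= t')%N -> (p1 pi t <= p1 pi t')%N.
Proof.
move=> le; rewrite /p1 !(big_mkcond (fun _ => _ && _)) /=; apply: leq_sum => v _.
case: ifP => //= /andP [h1 h2]; by rewrite (leq_trans h1 le) h2.
Qed.
Lemma p2_mono pi t t' : (t <= t')%N -> (p2 pi t <= p2 pi t')%N.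
Proof.
move=> le; rewrite /p2 !(big_mkcond (fun _ => _ && _)) /=; apply: leq_sum => v _.
case: ifP => //= /andP [h1 h2]; by rewrite (leq_trans h1 le) h2.
Qed.

Lemma p1_full pi : p1 pi (n + n) = (\sum_(u < n + n | pi u) 1)%N.
Proof. by apply: eq_bigl => v; rewrite ltn_ord. Qed.
Lemma p2_full pi : p2 pi (n + n) = (\sum_(u < n + n | ~~ pi u) 1)%N.
Proof. by apply: eq_bigl => v; rewrite ltn_ord. Qed.

Lemma sum_not pi : (\sum_(u < n + n | pi u) 1 + \sum_(u < n + n | ~~ pi u) 1)%N = (n + n)%N.
Proof.
have e : (\sum_(u < n + n) 1 = n + n)%N.
  by rewrite -[RHS]card_ord -sum1_card; apply: eq_bigl => v; rewrite inE.
by rewrite (bigID pi) in e.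
Qed.

Lemma p1_le pi t : pi \in dirs n -> (p1 pi t <= n)%N.
Proof.
rewrite inE => /eqP h; apply: (@leq_trans (p1 pi (n + n))); last by rewrite p1_full h.
rewrite /p1 !(big_mkcond (fun _ => _ && _)) /=.
apply: leq_sum => v _; case: ifP => //= /andP [h1 h2]; by rewrite ltn_ord h2.
Qed.
Lemma p2_le pi t : pi \in dirs n -> (p2 pi t <= n)%N.
Proof.
rewrite inE => /eqP h.
have h2 : (\sum_(u < n + n | ~~ pi u) 1)%N = n.
  by have := sum_not pi; rewrite h => /eqP; rewrite eqn_add2l => /eqP.
apply: (@leq_trans (p2 pi (n + n))); last by rewrite p2_full h2.
rewrite /p2 !(big_mkcond (fun _ => _ && _)) /=.
apply: leq_sum => v _; case: ifP => //= /andP [h1 h3]; by rewrite ltn_ord h3.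
Qed.
Lemma p1_n pi : pi \in dirs n -> p1 pi (n + n) = n.
Proof. by rewrite inE => /eqP h; rewrite p1_full h. Qed.
Lemma p2_n pi : pi \in dirs n -> p2 pi (n + n) = n.
Proof.
rewrite inE => /eqP h; rewrite p2_full.
by have := sum_not pi; rewrite h => /eqP; rewrite eqn_add2l => /eqP.
Qed.

End Paths.


Section Vtx.
Variables (R : realType) (n : nat) (a1 a2 : 'I_n.+1 -> R).
Hypothesis h1 : forall i j : 'I_n.+1, (i < j)%N -> a1 i < a1 j.
Hypothesis h2 : forall i j : 'I_n.+1, (i < j)%N -> a2 i < a2 j.

Let A1 m := a1 (inord m).
Let A2 m := a2 (inord m).

Lemma Amono (a : 'I_n.+1 -> R) : (forall i j : 'I_n.+1, (i < j)%N -> a i < a j) ->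
  forall m m', (m <= m')%N -> (m' <= n)%N -> a (inord m) <= a (inord m').
Proof.
move=> ha m m' le le'; rewrite le_eqVlt; case: (ltnP m m') => h.
  by apply/orP; right; apply: ha; rewrite !inordK //; lia.
have -> : m = m' by lia.
by rewrite eqxx.
Qed.

Lemma A1m m m' : (m <= m')%N -> (m' <= n)%N -> A1 m <= A1 m'.
Proof. exact: Amono. Qed.
Lemma A2m m m' : (m <= m')%N -> (m' <= n)%N -> A2 m <= A2 m'.
Proof. exact: Amono. Qed.

Lemma vtx_inord (a : 'I_n.+1 -> R) (j : 'I_n.+1) m : (m <= n)%N ->
  vtx a j (inord m) = a (inord (minn m j)).
Proof.
move=> hm; rewrite /vtx inordK; last by lia.
by case: leqP => h //; rewrite inord_val.
Qed.

Lemma sum_if (m : nat) (P : pred 'I_m) (F G : 'I_m -> R) :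
  \sum_(u | P u) F u + \sum_(u | ~~ P u) G u = \sum_u (if P u then F u else G u).
Proof.
rewrite [RHS](bigID P) /=; congr (_ + _); apply: eq_bigr => u hu.
  by rewrite hu.
by rewrite (negbTE hu).
Qed.

Definition Dh (pi : {ffun 'I_(n + n) -> bool}) (j k : 'I_n.+1) (u : 'I_(n + n)) : R :=
  if pi u then (A1 (minn (p1 pi u.+1) j) - A1 (minn (p1 pi u) j)) *
               (A2 (p2 pi u.+1) - A2 (minn (p2 pi u.+1) k))
  else (A1 (p1 pi u.+1) - A1 (minn (p1 pi u.+1) j)) *
       (A2 (minn (p2 pi u.+1) k) - A2 (minn (p2 pi u) k)).

Lemma Fhat_vtx (pi : {ffun 'I_(n + n) -> bool}) (j k : 'I_n.+1) : pi \in dirs n ->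
  Fhat a1 a2 pi (vtx a1 j, vtx a2 k) = a1 j * a2 k + \sum_u Dh pi j k u.
Proof.
move=> hpi; rewrite /Fhat /= -addrA sum_if.
pose Phi t := A1 (minn (p1 pi t) j) * A2 (minn (p2 pi t) k).
have -> : \sum_(u < n + n) (if pi u then
     a2 (inord (p2 pi u.+1)) * (vtx a1 j (inord (p1 pi u.+1)) - vtx a1 j (inord (p1 pi u)))
   else a1 (inord (p1 pi u.+1)) * (vtx a2 k (inord (p2 pi u.+1)) - vtx a2 k (inord (p2 pi u))))
   = \sum_(u < n + n) ((Phi u.+1 - Phi u) + Dh pi j k u).
  apply: eq_bigr => u _.
  rewrite !vtx_inord ?p1_le ?p2_le // /Phi /Dh -/(A1 _) -/(A2 _).
  rewrite p1S p2S; case: (pi u) => /=; rewrite ?addn0 ?addn1 /A1 /A2;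
    move: (p1 pi u) (p2 pi u) => i q; ring.
rewrite big_split /= -(big_mkord xpredT (fun u => Phi u.+1 - Phi u)) telescope_sumr //.
rewrite /Phi p1_0 p2_0 p1_n // p2_n // !min0n.
rewrite (minn_idPr (_ : (j <= n)%N)) ?(minn_idPr (_ : (k <= n)%N)); try by rewrite -ltnS.
rewrite /A1 /A2 !inord_val; ring.
Qed.

Lemma Dh_ge0 (pi : {ffun 'I_(n + n) -> bool}) j k u : pi \in dirs n -> 0 <= Dh pi j k u.
Proof.
move=> hpi; rewrite /Dh.
have b1 := p1_le u.+1 hpi; have b2 := p2_le u.+1 hpi.
have b1' := p1_le u hpi; have b2' := p2_le u hpi.
have m1 := p1_mono pi (leqnSn u); have m2 := p2_mono pi (leqnSn u).
case: (pi u); apply: mulr_ge0; rewrite subr_ge0.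
- apply: A1m; lia.
- apply: A2m; lia.
- apply: A1m; lia.
- apply: A2m; lia.
Qed.

Lemma Dh_path (pi : {ffun 'I_(n + n) -> bool}) (j k : 'I_n.+1) T u : pi \in dirs n ->
  j = p1 pi T :> nat -> k = p2 pi T :> nat -> Dh pi j k u = 0.
Proof.
move=> hpi hj hk; rewrite /Dh.
have m1 := p1_mono pi (leqnSn u); have m2 := p2_mono pi (leqnSn u).
case: (ltnP u T) => hT.
  have l1 := p1_mono pi hT; have l2 := p2_mono pi hT.
  case: (pi u).
    by rewrite (minn_idPl (_ : (p2 pi u.+1 <= k)%N)) ?subrr ?mulr0 //; lia.
  by rewrite (minn_idPl (_ : (p1 pi u.+1 <= j)%N)) ?subrr ?mul0r //; lia.
have l1 := p1_mono pi hT; have l2 := p2_mono pi hT.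
case: (pi u).
  by rewrite !(minn_idPr (_ : (j <= _)%N)) ?subrr ?mul0r //; lia.
by rewrite !(minn_idPr (_ : (k <= _)%N)) ?subrr ?mulr0 //; lia.
Qed.


Definition Dc (pi : {ffun 'I_(n + n) -> bool}) (j k : 'I_n.+1) (u : 'I_(n + n)) : R :=
  if pi u then (A1 (minn (p1 pi u.+1) j) - A1 (minn (p1 pi u) j)) *
               (A2 (maxn (n - p2 pi u.+1) k) - A2 (n - p2 pi u.+1))
  else (A1 (p1 pi u.+1) - A1 (minn (p1 pi u.+1) j)) *
       (A2 (maxn (n - p2 pi u) k) - A2 (maxn (n - p2 pi u.+1) k)).

Lemma A2maxmin N (k : 'I_n.+1) : A2 N = A2 (maxn N k) + A2 (minn N k) - A2 k.
Proof. by case: leqP => h; rewrite /A2 ?inord_val; ring. Qed.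

Lemma Fcheck_vtx (pi : {ffun 'I_(n + n) -> bool}) (j k : 'I_n.+1) : pi \in dirs n ->
  Fcheck a1 a2 pi (vtx a1 j, vtx a2 k) = a1 j * a2 k - \sum_u Dc pi j k u.
Proof.
move=> hpi; rewrite /Fcheck /= -addrA sum_if.
pose Psi t := A1 (minn (p1 pi t) j) * A2 (maxn (n - p2 pi t) k).
have -> : \sum_(u < n + n) (if pi u then
     a2 (inord (n - p2 pi u.+1)) * (vtx a1 j (inord (p1 pi u.+1)) - vtx a1 j (inord (p1 pi u)))
   else a1 (inord (p1 pi u.+1)) * (a2 (inord (n - p2 pi u.+1)) - a2 (inord (n - p2 pi u))
        - vtx a2 k (inord (n - p2 pi u.+1)) + vtx a2 k (inord (n - p2 pi u))))
   = \sum_(u < n + n) ((Psi u.+1 - Psi u) - Dc pi j k u).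
  apply: eq_bigr => u _.
  rewrite !vtx_inord ?p1_le ?leq_subr // /Psi /Dc -/(A1 _) -/(A2 _).
  rewrite -!/(A2 _) (A2maxmin (n - p2 pi u.+1) k) (A2maxmin (n - p2 pi u) k).
  rewrite p1S p2S; case: (pi u) => /=; rewrite ?addn0 ?addn1 /A1 /A2;
    move: (p1 pi u) (p2 pi u) => i q; ring.
rewrite sumrB -(big_mkord xpredT (fun u => Psi u.+1 - Psi u)) telescope_sumr //.
rewrite /Psi p1_0 p2_0 p1_n // p2_n // !min0n subn0 subnn max0n.
rewrite (minn_idPr (_ : (j <= n)%N)) ?(maxn_idPl (_ : (k <= n)%N)); try by rewrite -ltnS.
rewrite /A1 /A2 !inord_val; ring.
Qed.

Lemma Dc_ge0 (pi : {ffun 'I_(n + n) -> bool}) j k u : pi \in dirs n -> 0 <= Dc pi j k u.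
Proof.
move=> hpi; rewrite /Dc.
have b1 := p1_le u.+1 hpi; have b2 := p2_le u.+1 hpi.
have b1' := p1_le u hpi; have b2' := p2_le u hpi.
have m1 := p1_mono pi (leqnSn u); have m2 := p2_mono pi (leqnSn u).
have kn : (k <= n)%N by rewrite -ltnS.
case: (pi u); apply: mulr_ge0; rewrite subr_ge0.
- apply: A1m; lia.
- apply: A2m; lia.
- apply: A1m; lia.
- apply: A2m; lia.
Qed.

Lemma Dc_path (pi : {ffun 'I_(n + n) -> bool}) (j k : 'I_n.+1) T u : pi \in dirs n ->
  j = p1 pi T :> nat -> k = (n - p2 pi T)%N :> nat -> Dc pi j k u = 0.
Proof.
move=> hpi hj hk; rewrite /Dc.
have m1 := p1_mono pi (leqnSn u); have m2 := p2_mono pi (leqnSn u).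
have b2 := p2_le u.+1 hpi; have b2' := p2_le T hpi.
case: (ltnP u T) => hT.
  have l1 := p1_mono pi hT; have l2 := p2_mono pi hT.
  case: (pi u).
    by rewrite (maxn_idPl (_ : (k <= n - p2 pi u.+1)%N)) ?subrr ?mulr0 //; lia.
  by rewrite (minn_idPl (_ : (p1 pi u.+1 <= j)%N)) ?subrr ?mul0r //; lia.
have l1 := p1_mono pi hT; have l2 := p2_mono pi hT.
case: (pi u).
  by rewrite !(minn_idPr (_ : (j <= _)%N)) ?subrr ?mul0r //; lia.
by rewrite !(maxn_idPr (_ : (_ <= k)%N)) ?subrr ?mulr0 //; lia.
Qed.

End Vtx.


Section Aff.
Variables (R : realType) (n : nat).

Definition aff (G : pt R n -> R) := forall (I : finType) (w : I -> R) (P : I -> pt R n)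
  (s : pt R n), \sum_i w i = 1 -> (forall m, s.1 m = \sum_i w i * (P i).1 m) ->
  (forall m, s.2 m = \sum_i w i * (P i).2 m) -> G s = \sum_i w i * G (P i).

Lemma aff_cst c : aff (fun _ => c).
Proof. by move=> I w P s hw _ _; rewrite -mulr_suml hw mul1r. Qed.
Lemma aff_p1 m : aff (fun s => s.1 m).
Proof. by move=> I w P s hw h1 _; rewrite h1. Qed.
Lemma aff_p2 m : aff (fun s => s.2 m).
Proof. by move=> I w P s hw _ h2; rewrite h2. Qed.
Lemma affD G H : aff G -> aff H -> aff (fun s => G s + H s).
Proof.
move=> hG hH I w P s hw e1 e2; rewrite (hG I w P) // (hH I w P) // -big_split /=.
by apply: eq_bigr => i _; rewrite mulrDr.
Qed.
Lemma affB G H : aff G -> aff H -> aff (fun s => G s - H s).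
Proof.
move=> hG hH I w P s hw e1 e2; rewrite (hG I w P) // (hH I w P) // -sumrB /=.
by apply: eq_bigr => i _; rewrite mulrBr.
Qed.
Lemma affN G : aff G -> aff (fun s => - G s).
Proof.
move=> hG I w P s hw e1 e2; rewrite (hG I w P) // -sumrN.
by apply: eq_bigr => i _; rewrite mulrN.
Qed.
Lemma affM c G : aff G -> aff (fun s => c * G s).
Proof.
move=> hG I w P s hw e1 e2; rewrite (hG I w P) // mulr_sumr.
by apply: eq_bigr => i _; rewrite mulrCA.
Qed.
Lemma aff_sum (U : finType) (Q : pred U) (G : U -> pt R n -> R) :
  (forall u, aff (G u)) -> aff (fun s => \sum_(u | Q u) G u s).
Proof.
move=> hG I w P s hw e1 e2.
rewrite (eq_bigr (fun u => \sum_i w i * G u (P i))); last by move=> u _; apply: hG.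
rewrite exchange_big /=; apply: eq_bigr => i _; by rewrite mulr_sumr.
Qed.

Ltac solve_aff := repeat first [ apply: aff_cst | apply: affD | apply: affB
   | apply: aff_sum => ? | apply: affM | apply: affN | apply: aff_p1 | apply: aff_p2 ].

Lemma aff_Fhat (a1 a2 : 'I_n.+1 -> R) pi : aff (Fhat a1 a2 pi).
Proof. rewrite /Fhat; solve_aff. Qed.
Lemma aff_Fcheck (a1 a2 : 'I_n.+1 -> R) pi : aff (Fcheck a1 a2 pi).
Proof. rewrite /Fcheck; solve_aff. Qed.

Definition cmbs (I : Type) (r : seq I) (w : I -> R) (P : I -> pt R n) : pt R n :=
  (fun m => \sum_(i <- r) w i * (P i).1 m, fun m => \sum_(i <- r) w i * (P i).2 m).

Lemma zero_comb (I : Type) (r : seq I) (w : I -> R) (X : I -> R) :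
  (forall i, 0 <= w i) -> \sum_(i <- r) w i = 0 -> \sum_(i <- r) w i * X i = 0.
Proof.
move=> w0; elim: r => [|i r IH]; first by rewrite !big_nil.
rewrite !big_cons => /eqP; rewrite paddr_eq0 ?sumr_ge0 // => /andP [/eqP -> /eqP h].
by rewrite IH // mul0r add0r.
Qed.

Lemma scal_sum (I : Type) (r : seq I) (w : I -> R) (X : I -> R) S : S != 0 ->
  S * \sum_(i <- r) (w i / S) * X i = \sum_(i <- r) w i * X i.
Proof.
move=> hS; rewrite mulr_sumr; apply: eq_bigr => i _.
by rewrite mulrA mulrCA divff ?mulr1.
Qed.

Lemma jensen (D : pt R n -> Prop) (h : pt R n -> R) :
  (forall x y t, D x -> D y -> 0 <= t <= 1 -> D (comb t x y)) -> concave_on D h ->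
  forall (I : Type) (r : seq I) w P, (forall i, 0 <= w i) -> \sum_(i <- r) w i = 1 ->
  (forall i, D (P i)) -> D (cmbs r w P) /\ \sum_(i <- r) w i * h (P i) <= h (cmbs r w P).
Proof.
move=> Dc hc I; elim=> [|i r IH] w P w0 hw hP.
  by move: hw; rewrite big_nil => /eqP; rewrite eq_sym oner_eq0.
move: hw; rewrite big_cons; set S := \sum_(j <- r) w j => hw.
have S0 : 0 <= S by apply: sumr_ge0.
have [SE|SN] := eqVneq S 0.
  have wi : w i = 1 by rewrite -hw SE addr0.
  have -> : cmbs (i :: r) w P = P i.
    rewrite [RHS]surjective_pairing /cmbs; congr pair; apply: boolp.funext => m;
    by rewrite big_cons zero_comb // wi mul1r addr0.
  by rewrite big_cons zero_comb // wi mul1r addr0.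
have hs1 : \sum_(j <- r) w j / S = 1 by rewrite -mulr_suml divff.
have [Dy Jy] := IH (fun j => w j / S) P (fun j => divr_ge0 (w0 j) S0) hs1 hP.
have e1 : 1 - w i = S by rewrite -hw; ring.
have -> : cmbs (i :: r) w P = comb (w i) (P i) (cmbs r (fun j => w j / S) P).
  rewrite /cmbs /comb /=; congr pair; apply: boolp.funext => m;
  by rewrite big_cons e1 scal_sum.
have wi1 : 0 <= w i <= 1 by rewrite w0 /=; rewrite -subr_ge0 e1.
split; first exact: Dc.
rewrite big_cons -[X in _ + X](scal_sum _ _ _ SN).
apply: le_trans (hc _ _ _ (hP i) Dy wi1).
by rewrite e1 lerD2l ler_wpM2l.
Qed.

Lemma jensen_cvx (D : pt R n -> Prop) (h : pt R n -> R) :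
  (forall x y t, D x -> D y -> 0 <= t <= 1 -> D (comb t x y)) -> convex_on D h ->
  forall (I : Type) (r : seq I) w P, (forall i, 0 <= w i) -> \sum_(i <- r) w i = 1 ->
  (forall i, D (P i)) -> h (cmbs r w P) <= \sum_(i <- r) w i * h (P i).
Proof.
move=> Dc hc I r w P w0 hw hP.
have hc' : concave_on D (fun x => - h x).
  move=> x y t Dx Dy ht; have := hc x y t Dx Dy ht; lra.
have [_ J] := jensen Dc hc' w0 hw hP.
move: J; rewrite (eq_bigr (fun i => - (w i * h (P i)))) ?sumrN; last by move=> j _; rewrite mulrN.
by rewrite lerN2.
Qed.

End Aff.


Section NW.
Variable R : realType.

Definition NW (a b : nat) (l k : nat -> R) : Prop :=
 exists s : seq bool, exists rho : nat -> nat -> R,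
 [/\ count id s = a /\ count negb s = b, (forall i j, 0 <= rho i j),
     (forall i, (i <= a)%N -> \sum_(j < b.+1) rho i j = l i),
     (forall j, (j <= b)%N -> \sum_(i < a.+1) rho i j = k j)
   & (forall i j, rho i j != 0 -> exists2 t, (t <= size s)%N &
        (count id (take t s) = i /\ count negb (take t s) = j))].

Definition NWhyp (a b : nat) (l k : nat -> R) : Prop :=
  [/\ forall i, 0 <= l i, forall j, 0 <= k j &
      \sum_(i < a.+1) l i = \sum_(j < b.+1) k j].

Lemma NW_sym a b l k : NW b a k l -> NW a b l k.
Proof.
move=> [s [rho [[ca cb] r0 rows cols supp]]].
exists (map negb s), (fun i j => rho j i); split => //.
- split; first by rewrite count_map.
- by rewrite count_map -ca; apply: eq_count => x /=; rewrite negbK.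
- move=> i j /supp [t ht [e1 e2]]; exists t; first by rewrite size_map.
  rewrite -map_take !count_map; split; first by [].
  by rewrite -e1; apply: eq_count => x /=; rewrite negbK.
Qed.

Lemma count_take_le (p : pred bool) s t : (count p (take t s) <= count p s)%N.
Proof. by rewrite -{2}(cat_take_drop t s) count_cat leq_addr. Qed.

Lemma term_le_sum (l : nat -> R) a : (forall i, 0 <= l i) -> l a <= \sum_(i < a.+1) l i.
Proof.
move=> l0; rewrite big_ord_recr /= lerDr; exact: sumr_ge0.
Qed.

Lemma NW_step a b l k : (forall l k, NWhyp a b l k -> NW a b l k) ->
  NWhyp a.+1 b l k -> l a.+1 <= k b -> NW a.+1 b l k.
Proof.
move=> IH [l0 k0 hs] hle.
pose k' j := if j == b then k b - l a.+1 else k j.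
have hk' : forall j, 0 <= k' j.
  by move=> j; rewrite /k'; case: eqP => _; rewrite ?subr_ge0.
have hs' : \sum_(i < a.+1) l i = \sum_(j < b.+1) k' j.
  have e1 : \sum_(i < a.+2) l i = \sum_(i < a.+1) l i + l a.+1 by rewrite big_ord_recr.
  have e2 : \sum_(j < b.+1) k j = \sum_(j < b) k j + k b by rewrite big_ord_recr.
  have e3 : \sum_(j < b.+1) k' j = \sum_(j < b) k j + (k b - l a.+1).
    rewrite big_ord_recr /= /k' eqxx; congr (_ + _); apply: eq_bigr => j _.
    by rewrite /= (ltn_eqF (ltn_ord j)).
  lra.
have [s [rho [[ca cb] r0 rows cols supp]]] := IH l k' (And3 l0 hk' hs').
have bnd : forall i j, rho i j != 0 -> (i <= a)%N /\ (j <= b)%N.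
  move=> i j /supp [t _ [<- <-]]; split; [rewrite -ca|rewrite -cb]; exact: count_take_le.
have z : forall i j, (a < i)%N -> rho i j = 0.
  move=> i j hi; apply/eqP; apply/negPn/negP => /bnd [h _]; lia.
exists (rcons s true), (fun i j => if (i == a.+1) && (j == b) then l a.+1 else rho i j).
split.
- by split; rewrite -cats1 count_cat ?ca ?cb /= ?addn1 ?addn0.
- by move=> i j; case: ifP.
- move=> i hi; case: (eqVneq i a.+1) => [->|ne].
    rewrite big_ord_recr /= eqxx big1 ?add0r //= => j _.
    by rewrite (ltn_eqF (ltn_ord j)) /= z.
  have hia : (i <= a)%N by move: ne => /eqP ne; lia.
  rewrite (eq_bigr (fun j : 'I_b.+1 => rho i j)) ?rows //.
- move=> j hj; rewrite big_ord_recr /= eqxx /=.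
  rewrite (eq_bigr (fun i : 'I_a.+1 => rho i j)); last first.
    by move=> i _; rewrite /= (ltn_eqF (ltn_ord i)).
  rewrite cols // /k'; case: (eqVneq j b) => [->|ne]; first by ring.
  by rewrite z // addr0.
- move=> i j; case: ifP => [/andP [/eqP -> /eqP ->] _|_ /supp [t ht [e1 e2]]].
    exists (size (rcons s true)) => //; rewrite take_size -cats1 !count_cat ca cb /=.
    by split; lia.
  exists t; first by rewrite size_rcons; lia.
  by rewrite -cats1 takel_cat.
Qed.

Lemma NW_ex N : forall a b, (a + b)%N = N -> forall l k, NWhyp a b l k -> NW a b l k.
Proof.
elim: N => [|N IH] a b hab l k hyp.
  have ea : a = 0%N by lia.
  have eb : b = 0%N by lia.
  subst a b.
  move: hyp => [l0 k0 hs]; move: hs; rewrite !big_ord1 => hs.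
  exists [::], (fun i j => if (i == 0%N) && (j == 0%N) then l 0%N else 0); split => //.
  - by move=> i j; case: ifP.
  - by move=> i; rewrite leqn0 => /eqP ->; rewrite big_ord1.
  - by move=> j; rewrite leqn0 => /eqP ->; rewrite big_ord1.
  - move=> i j; case: ifP => [/andP [/eqP -> /eqP ->] _|]; last by rewrite eqxx.
    by exists 0%N.
have [l0 k0 hs] := hyp.
case: (boolP ((0 < a)%N && (l a <= k b))) => [/andP [ha hle]|hn].
  destruct a as [|a'] => //.
  apply: NW_step hyp hle; apply: IH; lia.
have hb : (0 < b)%N.
  case: b hab hyp hs hn => // hab hyp hs hn; exfalso; move: hn.
  have ha : (0 < a)%N by lia.
  have e : k 0%N = \sum_(j < 1) k j by rewrite big_ord1.
  by rewrite ha /= e -hs term_le_sum.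
have hle : k b <= l a.
  case: a hab hyp hs hn => [|a'] hab hyp hs hn.
    have e : l 0%N = \sum_(i < 1) l i by rewrite big_ord1.
    by rewrite e hs term_le_sum.
  by move: hn => /=; rewrite -ltNge => /ltW.
destruct b as [|b'] => //.
apply: NW_sym; apply: NW_step => //.
  move=> l2 k2 hyp2; apply: NW_sym; apply: IH; [lia|].
  by case: hyp2 => ? ? ?; split.
Qed.

End NW.


Section SeqPath.
Variable n : nat.

Definition ffs (s : seq bool) : {ffun 'I_(n + n) -> bool} := [ffun u : 'I_(n + n) => nth false s u].

Lemma p1_seq s T : size s = (n + n)%N -> (T <= n + n)%N -> p1 (ffs s) T = count id (take T s).
Proof.
move=> hs; elim: T => [|T IH] hT; first by rewrite p1_0 take0.
have hT' : (T < n + n)%N by [].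
rewrite (p1S (ffs s) (Ordinal hT')).
rewrite IH; last exact: ltnW.
have hTs : (T < size s)%N by rewrite hs.
rewrite (take_nth false hTs) -cats1 count_cat /ffs ffunE.
change (nat_of_ord (Ordinal hT')) with T.
by case: (nth false s T).
Qed.

Lemma p2_seq s T : size s = (n + n)%N -> (T <= n + n)%N -> p2 (ffs s) T = count negb (take T s).
Proof.
move=> hs; elim: T => [|T IH] hT; first by rewrite p2_0 take0.
have hT' : (T < n + n)%N by [].
rewrite (p2S (ffs s) (Ordinal hT')).
rewrite IH; last exact: ltnW.
have hTs : (T < size s)%N by rewrite hs.
rewrite (take_nth false hTs) -cats1 count_cat /ffs ffunE.
change (nat_of_ord (Ordinal hT')) with T.
by case: (nth false s T).
Qed.

Lemma ffs_dirs s : size s = (n + n)%N -> count id s = n -> ffs s \in dirs n.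
Proof.
move=> hs hc; rewrite inE -p1_full p1_seq // -hs take_size hc //.
Qed.

Lemma pi0_dirs : pi0 n \in dirs n.
Proof.
rewrite inE; apply/eqP.
rewrite (eq_bigl (fun u : 'I_(n + n) => (u < n)%N)); last by move=> u; rewrite /pi0 ffunE.
rewrite -(big_ord_widen _ (fun _ => 1%N)) ?leq_addr //.
by rewrite -[RHS]card_ord -sum1_card; apply: eq_bigl => v; rewrite inE.
Qed.

End SeqPath.

Section Main.
Variables (R : realType) (n : nat) (a1 a2 : 'I_n.+1 -> R).
Hypothesis h1 : forall i j : 'I_n.+1, (i < j)%N -> a1 i < a1 j.
Hypothesis h2 : forall i j : 'I_n.+1, (i < j)%N -> a2 i < a2 j.

Definition V (p : 'I_n.+1 * 'I_n.+1) : pt R n := (vtx a1 p.1, vtx a2 p.2).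

Lemma vtx_max (a : 'I_n.+1 -> R) j : vtx a j ord_max = a j.
Proof.
rewrite /vtx; case: leqP => // h.
have hj := ltn_ord j.
have e : val j = n by move: h; rewrite /=; lia.
by congr a; apply: val_inj; rewrite /= e.
Qed.

Lemma bilV p : bil (V p) = a1 p.1 * a2 p.2.
Proof. by rewrite /bil /V /= !vtx_max. Qed.

Lemma inQi_vtx (a : 'I_n.+1 -> R) j : in_Qi a (vtx a j).
Proof.
exists (fun i => if i == j then 1 else 0); split.
- by move=> i; case: ifP.
- by rewrite (bigD1 j) //= eqxx big1 ?addr0 // => i /negbTE ->.
- move=> k; rewrite (bigD1 j) //= eqxx mul1r big1 ?addr0 //.
  by move=> i /negbTE ->; rewrite mul0r.
Qed.

Lemma inQ_V p : inQ a1 a2 (V p).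
Proof. by split; apply: inQi_vtx. Qed.

Lemma inQi_comb (a : 'I_n.+1 -> R) x y t : in_Qi a x -> in_Qi a y -> 0 <= t <= 1 ->
  in_Qi a (fun k => t * x k + (1 - t) * y k).
Proof.
move=> [l [l0 l1 lx]] [q [q0 q1 qy]] /andP [t0 t1].
exists (fun j => t * l j + (1 - t) * q j); split.
- move=> j; apply: addr_ge0; apply: mulr_ge0 => //; by rewrite subr_ge0.
- by rewrite big_split /= -!mulr_sumr l1 q1; ring.
- move=> k; rewrite lx qy !mulr_sumr -big_split /=; apply: eq_bigr => j _; ring.
Qed.

Lemma inQ_comb x y t : inQ a1 a2 x -> inQ a1 a2 y -> 0 <= t <= 1 -> inQ a1 a2 (comb t x y).
Proof. by move=> [x1 x2] [y1 y2] ht; split; apply: inQi_comb. Qed.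

Lemma dec_marg (s : pt R n) (l q : 'I_n.+1 -> R) (rho : 'I_n.+1 * 'I_n.+1 -> R) :
  (forall m, s.1 m = \sum_j l j * vtx a1 j m) -> (forall m, s.2 m = \sum_k q k * vtx a2 k m) ->
  (forall j, \sum_k rho (j, k) = l j) -> (forall k, \sum_j rho (j, k) = q k) ->
  (forall m, s.1 m = \sum_p rho p * (V p).1 m) /\ (forall m, s.2 m = \sum_p rho p * (V p).2 m).
Proof.
move=> e1 e2 r1 r2; split => m.
  rewrite e1; transitivity (\sum_j \sum_k rho (j, k) * vtx a1 j m).
    by apply: eq_bigr => j _; rewrite -r1 mulr_suml.
  by rewrite pair_bigA; apply: eq_bigr => -[j k] _.
rewrite e2; transitivity (\sum_j \sum_k rho (j, k) * vtx a2 k m).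
  by rewrite exchange_big; apply: eq_bigr => k _; rewrite -r2 mulr_suml.
by rewrite pair_bigA; apply: eq_bigr => -[j k] _.
Qed.

Lemma sum_marg (l : 'I_n.+1 -> R) (rho : 'I_n.+1 * 'I_n.+1 -> R) :
  (forall j, \sum_k rho (j, k) = l j) -> \sum_p rho p = \sum_j l j.
Proof.
move=> r1; transitivity (\sum_j \sum_k rho (j, k)).
  by rewrite pair_bigA; apply: eq_bigr => -[j k] _.
by apply: eq_bigr => j _; rewrite r1.
Qed.

Lemma prod_dec (s : pt R n) : inQ a1 a2 s -> exists rho : 'I_n.+1 * 'I_n.+1 -> R,
  [/\ forall p, 0 <= rho p, \sum_p rho p = 1,
      (forall m, s.1 m = \sum_p rho p * (V p).1 m) /\ (forall m, s.2 m = \sum_p rho p * (V p).2 m)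
    & bil s = \sum_p rho p * (a1 p.1 * a2 p.2)].
Proof.
move=> [[l [l0 l1 ls]] [q [q0 q1 qs]]].
pose rho p := l p.1 * q p.2.
have r1 : forall j, \sum_k rho (j, k) = l j by move=> j; rewrite /rho /= -mulr_sumr q1 mulr1.
have r2 : forall k, \sum_j rho (j, k) = q k by move=> k; rewrite /rho /= -mulr_suml l1 mul1r.
exists rho; split.
- by move=> p; apply: mulr_ge0.
- by rewrite (sum_marg r1).
- exact: dec_marg.
rewrite /bil ls qs.
rewrite (eq_bigr (fun j => l j * a1 j)); last by move=> j _; rewrite vtx_max.
rewrite [X in _ * X](eq_bigr (fun k => q k * a2 k)); last by move=> k _; rewrite vtx_max.
rewrite mulr_suml; transitivity (\sum_j \sum_k rho (j, k) * (a1 j * a2 k)).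
  apply: eq_bigr => j _; rewrite mulr_sumr; apply: eq_bigr => k _; rewrite /rho /=; ring.
by rewrite pair_bigA; apply: eq_bigr => -[j k] _.
Qed.

Lemma Fhat_ge pi s : pi \in dirs n -> inQ a1 a2 s -> bil s <= Fhat a1 a2 pi s.
Proof.
move=> hpi hs; have [rho [r0 r1 [e1 e2] eb]] := prod_dec hs.
rewrite eb (aff_Fhat a1 a2 pi r1 e1 e2); apply: ler_sum => p _.
rewrite /V Fhat_vtx // ler_wpM2l // lerDl; apply: sumr_ge0 => u _; exact: Dh_ge0.
Qed.

Lemma Fcheck_le pi s : pi \in dirs n -> inQ a1 a2 s -> Fcheck a1 a2 pi s <= bil s.
Proof.
move=> hpi hs; have [rho [r0 r1 [e1 e2] eb]] := prod_dec hs.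
rewrite eb (aff_Fcheck a1 a2 pi r1 e1 e2); apply: ler_sum => p _.
rewrite /V Fcheck_vtx // ler_wpM2l // gerDl oppr_le0; apply: sumr_ge0 => u _; exact: Dc_ge0.
Qed.

Lemma F_comb (G : pt R n -> R) x y t : aff G -> G (comb t x y) = t * G x + (1 - t) * G y.
Proof.
move=> hG; rewrite (hG bool (fun b => if b then t else 1 - t) (fun b => if b then x else y)).
- by rewrite big_bool.
- by rewrite big_bool /=; ring.
- by move=> m; rewrite big_bool.
- by move=> m; rewrite big_bool.
Qed.

End Main.


Section Coup.
Variables (R : realType) (n : nat).

Lemma NW_n (l : 'I_n.+1 -> R) (q' : nat -> R) :
  (forall j, 0 <= l j) -> (forall j, 0 <= q' j) -> \sum_j l j = \sum_(j < n.+1) q' j ->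
  exists s : seq bool, exists rho : nat -> nat -> R,
  [/\ size s = (n + n)%N, ffs n s \in dirs n, (forall i j, 0 <= rho i j),
      (forall i : 'I_n.+1, \sum_(j < n.+1) rho i j = l i) /\
      (forall j, (j <= n)%N -> \sum_(i < n.+1) rho i j = q' j)
    & (forall i j, rho i j != 0 -> exists2 T, (T <= n + n)%N &
        (i = p1 (ffs n s) T /\ j = p2 (ffs n s) T))].
Proof.
move=> l0 q0 hsum.
have hyp : NWhyp n n (fun i => l (inord i)) q'.
  split => //.
  by rewrite -hsum; apply: eq_bigr => i _; rewrite inord_val.
have [s [rho [[ca cb] r0 rows cols supp]]] := @NW_ex R (n + n)%N n n erefl _ _ hyp.
have hsz : size s = (n + n)%N.
  by rewrite -(count_predC id s) ca -cb; congr addn; apply: eq_count.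
exists s, rho; split => //.
- exact: ffs_dirs.
- split => //; move=> i; rewrite rows ?inord_val //; by rewrite -ltnS.
- move=> i j /supp [T hT [e1 e2]]; exists T; first by rewrite -hsz.
  by rewrite p1_seq ?p2_seq -?hsz // e1 e2.
Qed.

Lemma coup_hat (l q : 'I_n.+1 -> R) : (forall j, 0 <= l j) -> (forall k, 0 <= q k) ->
  \sum_j l j = 1 -> \sum_k q k = 1 ->
  exists2 pi, pi \in dirs n & exists rho : 'I_n.+1 * 'I_n.+1 -> R,
   [/\ forall p, 0 <= rho p, (forall j, \sum_k rho (j, k) = l j),
       (forall k, \sum_j rho (j, k) = q k) &
       forall p, rho p != 0 -> exists2 T, (T <= n + n)%N &
          (p.1 = p1 pi T :> nat /\ p.2 = p2 pi T :> nat)].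
Proof.
move=> l0 q0 l1 q1.
have hs : \sum_j l j = \sum_(j < n.+1) q (inord j).
  by rewrite l1 -q1; apply: eq_bigr => j _; rewrite inord_val.
have [s [rho [hsz hd r0 [rows cols] supp]]] := NW_n (l := l) l0 (fun j => q0 (inord j)) hs.
exists (ffs n s) => //; exists (fun p : 'I_n.+1 * 'I_n.+1 => rho p.1 p.2); split.
- by move=> p; apply: r0.
- by move=> j; rewrite rows.
- by move=> k; rewrite /= cols ?inord_val // -ltnS.
- by move=> p /supp.
Qed.

Lemma coup_check (l q : 'I_n.+1 -> R) : (forall j, 0 <= l j) -> (forall k, 0 <= q k) ->
  \sum_j l j = 1 -> \sum_k q k = 1 ->
  exists2 pi, pi \in dirs n & exists rho : 'I_n.+1 * 'I_n.+1 -> R,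
   [/\ forall p, 0 <= rho p, (forall j, \sum_k rho (j, k) = l j),
       (forall k, \sum_j rho (j, k) = q k) &
       forall p, rho p != 0 -> exists2 T, (T <= n + n)%N &
          (p.1 = p1 pi T :> nat /\ p.2 = (n - p2 pi T)%N :> nat)].
Proof.
move=> l0 q0 l1 q1.
have hs : \sum_j l j = \sum_(j < n.+1) q (inord (n - j)).
  rewrite l1 -q1 (reindex_inj rev_ord_inj) /=; apply: eq_bigr => j _.
  by congr q; apply: val_inj; rewrite /= subSS inordK // ltnS leq_subr.
have [s [rho [hsz hd r0 [rows cols] supp]]] := NW_n (l := l) l0 (fun j => q0 (inord (n - j))) hs.
exists (ffs n s) => //; exists (fun p : 'I_n.+1 * 'I_n.+1 => rho p.1 (n - p.2)%N); split.
- by move=> p; apply: r0.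
- move=> j; rewrite -(rows j) (reindex_inj rev_ord_inj) /=; apply: eq_bigr => k _.
  by rewrite subSS subKn // -ltnS.
- move=> k; rewrite /= cols ?leq_subr // subKn ?inord_val // -ltnS.
  exact: ltn_ord.
- move=> [j k] /supp [T hT [e1 e2]]; exists T => //; split => //=.
  have := ltn_ord k; rewrite /= in e2 *; lia.
Qed.

End Coup.


Section Final.
Variables (R : realType) (n : nat) (a1 a2 : 'I_n.+1 -> R).
Hypothesis h1 : forall i j : 'I_n.+1, (i < j)%N -> a1 i < a1 j.
Hypothesis h2 : forall i j : 'I_n.+1, (i < j)%N -> a2 i < a2 j.

Lemma Fcheck_bcheck pi x : pi \in dirs n -> Fcheck a1 a2 pi x <= bcheck a1 a2 x.
Proof. by move=> hpi; rewrite /bcheck; apply: le_bigmax_cond. Qed.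
Lemma bhat_Fhat pi x : pi \in dirs n -> bhat a1 a2 x <= Fhat a1 a2 pi x.
Proof. by move=> hpi; rewrite /bhat; apply: bigmin_le_cond. Qed.

Lemma bcheck_conv : convex_on (inQ a1 a2) (bcheck a1 a2).
Proof.
move=> x y t hx hy /andP [t0 t1].
have key : forall pi, pi \in dirs n ->
    Fcheck a1 a2 pi (comb t x y) <= t * bcheck a1 a2 x + (1 - t) * bcheck a1 a2 y.
  move=> pi hpi; rewrite (F_comb x y t (aff_Fcheck a1 a2 pi)).
  by apply: lerD; apply: ler_wpM2l; rewrite ?subr_ge0 ?Fcheck_bcheck.
rewrite [X in X <= _]/bcheck; apply: bigmax_le; first exact: key (pi0_dirs n).
exact: key.
Qed.

Lemma bhat_conc : concave_on (inQ a1 a2) (bhat a1 a2).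
Proof.
move=> x y t hx hy /andP [t0 t1].
have key : forall pi, pi \in dirs n ->
    t * bhat a1 a2 x + (1 - t) * bhat a1 a2 y <= Fhat a1 a2 pi (comb t x y).
  move=> pi hpi; rewrite (F_comb x y t (aff_Fhat a1 a2 pi)).
  by apply: lerD; apply: ler_wpM2l; rewrite ?subr_ge0 ?bhat_Fhat.
rewrite [X in _ <= X]/bhat; apply: le_bigmin; first exact: key (pi0_dirs n).
exact: key.
Qed.

Lemma bhat_tight h x : concave_on (inQ a1 a2) h -> (forall y, inQ a1 a2 y -> bil y <= h y) ->
  inQ a1 a2 x -> bhat a1 a2 x <= h x.
Proof.
move=> hc hf hx; have hx' := hx; case: hx' => [[l [l0 l1 ls]] [q [q0 q1 qs]]].
have [pi hpi [rho [r0 rl rq supp]]] := coup_hat l0 q0 l1 q1.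
have [e1 e2] := dec_marg ls qs rl rq.
have r1 : \sum_p rho p = 1 by rewrite (sum_marg rl) l1.
have [_ J] := jensen (@inQ_comb R n a1 a2) hc r0 r1 (inQ_V a1 a2).
have hcm : cmbs (index_enum _) rho (V a1 a2) = x.
  rewrite [RHS]surjective_pairing /cmbs; congr pair; apply: boolp.funext => m.
    by rewrite e1.
  by rewrite e2.
rewrite hcm in J; apply: le_trans J.
apply: (le_trans (bhat_Fhat x hpi)).
rewrite (aff_Fhat a1 a2 pi r1 e1 e2); apply: ler_sum => p _.
have [->|nz] := eqVneq (rho p) 0; first by rewrite !mul0r.
apply: ler_wpM2l => //; apply: le_trans (hf _ (inQ_V a1 a2 p)).
have [T hT [ep1 ep2]] := supp p nz.
rewrite bilV /V Fhat_vtx // big1 ?addr0 // => u _.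
exact: (Dh_path a1 a2 u hpi ep1 ep2).
Qed.

Lemma bcheck_tight h x : convex_on (inQ a1 a2) h -> (forall y, inQ a1 a2 y -> h y <= bil y) ->
  inQ a1 a2 x -> h x <= bcheck a1 a2 x.
Proof.
move=> hc hf hx; have hx' := hx; case: hx' => [[l [l0 l1 ls]] [q [q0 q1 qs]]].
have [pi hpi [rho [r0 rl rq supp]]] := coup_check l0 q0 l1 q1.
have [e1 e2] := dec_marg ls qs rl rq.
have r1 : \sum_p rho p = 1 by rewrite (sum_marg rl) l1.
have J := jensen_cvx (@inQ_comb R n a1 a2) hc r0 r1 (inQ_V a1 a2).
have hcm : cmbs (index_enum _) rho (V a1 a2) = x.
  rewrite [RHS]surjective_pairing /cmbs; congr pair; apply: boolp.funext => m.
    by rewrite e1.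
  by rewrite e2.
rewrite hcm in J; apply: le_trans J _.
apply: le_trans (Fcheck_bcheck x hpi).
rewrite (aff_Fcheck a1 a2 pi r1 e1 e2); apply: ler_sum => p _.
have [->|nz] := eqVneq (rho p) 0; first by rewrite !mul0r.
apply: ler_wpM2l => //; apply: le_trans (hf _ (inQ_V a1 a2 p)) _.
have [T hT [ep1 ep2]] := supp p nz.
rewrite bilV /V Fcheck_vtx // big1 ?subr0 // => u _.
exact: (Dc_path a1 a2 u hpi ep1 ep2).
Qed.

End Final.

Unset Implicit Arguments.

Theorem corollary4p4 (R : realType) (n : nat) (a1 a2 : 'I_n.+1 -> R) :
  (0 < n)%N ->
  (forall i j : 'I_n.+1, (i < j)%N -> a1 i < a1 j) ->
  (forall i j : 'I_n.+1, (i < j)%N -> a2 i < a2 j) ->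
  is_convex_envelope (inQ a1 a2) (@bil R n) (bcheck a1 a2) /\
  is_concave_envelope (inQ a1 a2) (@bil R n) (bhat a1 a2).
Proof.
move=> _ h1 h2; split; split.
- exact: bcheck_conv.
- move=> x hx; rewrite /bcheck; apply: bigmax_le.
    by have H := Fcheck_le h1 h2 (pi0_dirs n) hx; exact H.
  by move=> pi hpi; have H := Fcheck_le h1 h2 hpi hx; exact H.
- by move=> h hc hf x hx; apply: bcheck_tight.
- exact: bhat_conc.
- move=> x hx; rewrite /bhat; apply: le_bigmin.
    by have H := Fhat_ge h1 h2 (pi0_dirs n) hx; exact H.
  by move=> pi hpi; have H := Fhat_ge h1 h2 hpi hx; exact H.
- by move=> h hc hf x hx; apply: bhat_tight.
Qed.
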